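(* In the setting of the Jordan plane $A_J=k\langle x_1,x_2\rangle/(x_2x_1-x_1x_2-x_1^2)$ with a right $K$-comodule algebra structure $\rho(x_i)=x_1\otimes a_{1i}+x_2\otimes a_{2i}$, $K$ a Hopf algebra with bijective antipode $S$, and homological codeterminant ${\sf D}$, we have $$S^2(a_{11})={\sf D}(a_{11}-2a_{21}){\sf D}^{-1},\quad S^2(a_{12})={\sf D}(a_{12}+2a_{11}-2a_{22}-4a_{21}){\sf D}^{-1},$$ $$S^2(a_{21})={\sf D}a_{21}{\sf D}^{-1},\quad S^2(a_{22})={\sf D}(a_{22}+2a_{21}){\sf D}^{-1}.$$
   Context: The Ext-algebra $E$ of $A_J$ is a left $K$-comodule algebra via $\rho^!(x_i^* )=\sum_s a_{is}\otimes x_s^*$ on $E_1=(A_1)^*$; the homological codeterminant is the grouplike ${\sf D}\in K$ with $\rho^!(\mathfrak e)={\sf D}\otimes\mathfrak e$ for $\mathfrak e$ spanning $E_2$. *)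

(* Defs.v *)
From HB Require Import structures.
From mathcomp Require Import all_boot all_order all_algebra.
Set Implicit Arguments. Unset Strict Implicit. Unset Printing Implicit Defensive.
Import Order.TTheory GRing.Theory Num.Theory.
Local Open Scope ring_scope.

Definition lin (k : fieldType) (U V : lmodType k) (f : U -> V) : Prop :=
  forall (c : k) (u v : U), f (c *: u + v) = c *: f u + f v.

Definition is_tensor2 (k : fieldType) (U V W : lmodType k) (t : U -> V -> W)
  : Prop :=
  [/\ forall v : V, lin (fun u : U => t u v),
      forall u : U, lin (t u) &
      forall (X : lmodType k) (f : U -> V -> X),
        (forall v : V, lin (fun u : U => f u v)) -> (forall u : U, lin (f u)) ->
        (exists2 g : W -> X, lin g & forall u v, g (t u v) = f u v) /\
        (forall g1 g2 : W -> X, lin g1 -> lin g2 ->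
           (forall u v, g1 (t u v) = g2 (t u v)) -> g1 =1 g2)].

Definition is_tensor3 (k : fieldType) (U V Y W : lmodType k)
  (t : U -> V -> Y -> W) : Prop :=
  [/\ forall v y, lin (fun u : U => t u v y),
      forall u y, lin (fun v : V => t u v y),
      forall u v, lin (t u v) &
      forall (X : lmodType k) (f : U -> V -> Y -> X),
        (forall v y, lin (fun u : U => f u v y)) ->
        (forall u y, lin (fun v : V => f u v y)) ->
        (forall u v, lin (f u v)) ->
        (exists2 g : W -> X, lin g & forall u v y, g (t u v y) = f u v y) /\
        (forall g1 g2 : W -> X, lin g1 -> lin g2 ->
           (forall u v y, g1 (t u v y) = g2 (t u v y)) -> g1 =1 g2)].

(*  hKK / htens : the algebra K (x) K, hT3 / ht3 : K (x) K (x) K.             *)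
(*  The auxiliary maps (hlam_r, ..., hid_S) are the linear maps               *)
(*  - (x) c, a (x) -, Delta (x) id, id (x) Delta, eps (x) id, id (x) eps,     *)
(*  m o (S (x) id), m o (id (x) S); they are uniquely determined by their     *)
(*  values on pure tensors (universal property), so carrying them as data     *)
(*  loses no generality.                                                       *)
Record hopf_algebra (k : fieldType) (K : algType k) := HopfAlgebra {
  hKK : algType k;
  htens : K -> K -> hKK;
  hT3 : lmodType k;
  ht3 : K -> K -> K -> hT3;
  hDelta : K -> hKK;
  heps : K -> k;
  hS : K -> K;
  hlam_r : K -> hKK -> hT3;
  hlam_l : K -> hKK -> hT3;
  hDelta_id : hKK -> hT3;
  hid_Delta : hKK -> hT3;
  heps_id : hKK -> K;
  hid_eps : hKK -> K;
  hS_id : hKK -> K;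
  hid_S : hKK -> K;
  htens_univ : is_tensor2 htens;
  htens_mul : forall a b c d, htens a b * htens c d = htens (a * c) (b * d);
  htens_one : htens 1 1 = 1;
  ht3_univ : is_tensor3 ht3;
  hDelta_lin : lin hDelta;
  hDelta_mul : forall x y, hDelta (x * y) = hDelta x * hDelta y;
  hDelta_one : hDelta 1 = 1;
  heps_lin : forall (c : k) x y, heps (c *: x + y) = c * heps x + heps y;
  heps_mul : forall x y, heps (x * y) = heps x * heps y;
  heps_one : heps 1 = 1;
  hS_lin : lin hS;
  hlam_r_lin : forall c, lin (hlam_r c);
  hlam_r_tens : forall a b c, hlam_r c (htens a b) = ht3 a b c;
  hlam_l_lin : forall a, lin (hlam_l a);
  hlam_l_tens : forall a b c, hlam_l a (htens b c) = ht3 a b c;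
  hDelta_id_lin : lin hDelta_id;
  hDelta_id_tens : forall a b, hDelta_id (htens a b) = hlam_r b (hDelta a);
  hid_Delta_lin : lin hid_Delta;
  hid_Delta_tens : forall a b, hid_Delta (htens a b) = hlam_l a (hDelta b);
  heps_id_lin : lin heps_id;
  heps_id_tens : forall a b, heps_id (htens a b) = heps a *: b;
  hid_eps_lin : lin hid_eps;
  hid_eps_tens : forall a b, hid_eps (htens a b) = heps b *: a;
  hS_id_lin : lin hS_id;
  hS_id_tens : forall a b, hS_id (htens a b) = hS a * b;
  hid_S_lin : lin hid_S;
  hid_S_tens : forall a b, hid_S (htens a b) = a * hS b;
  hcoassoc : forall x, hDelta_id (hDelta x) = hid_Delta (hDelta x);
  hcounit_l : forall x, heps_id (hDelta x) = x;
  hcounit_r : forall x, hid_eps (hDelta x) = x;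
  hantipode_l : forall x, hS_id (hDelta x) = heps x *: 1;
  hantipode_r : forall x, hid_S (hDelta x) = heps x *: 1
}.

(* Jordan plane A_J = k<x1,x2>/(x2x1 - x1x2 - x1^2).  Generators are indexed *)
(* by 'I_2 (index 0 = x1, index 1 = x2).  The degree-2 part (A_J)_2 has the   *)
(* basis x1^2, x1x2, x2^2 (indexed by 'I_3), and                              *)
(*   jordan_coord s t b = coordinate of x_s x_t on basis vector b,           *)
(* using x2x1 = x1x2 + x1^2.                                                  *)
Definition jordan_coord (k : fieldType) (s t : 'I_2) (b : 'I_3) : k :=
  match nat_of_ord s, nat_of_ord t, nat_of_ord b with
  | 0%N, 0%N, 0%N => 1
  | 0%N, 1%N, 1%N => 1
  | 1%N, 0%N, 0%N => 1
  | 1%N, 0%N, 1%N => 1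
  | 1%N, 1%N, 2%N => 1
  | _, _, _ => 0
  end.

(* With rho(x_i) = sum_s x_s (x) a s i, the element rho(x_i) rho(x_j) of     *)
(* (A_J)_2 (x) K is sum_b (basis b) (x) rho_prod2 a i j b.                    *)
Definition rho_prod2 (k : fieldType) (K : algType k) (a : 'I_2 -> 'I_2 -> K)
  (i j : 'I_2) (b : 'I_3) : K :=
  \sum_(s < 2) \sum_(t < 2) jordan_coord k s t b *: (a s i * a t j).

(* rho(x_i) = x_1 (x) a_1i + x_2 (x) a_2i defines a right K-comodule algebra *)
(* structure on A_J: rho is an algebra map (it kills the defining relation    *)
(* x2x1 - x1x2 - x1^2), coassociative and counital.  Since rho is determined  *)
(* by its values on the generators, these axioms amount to the conditions     *)
(* below (coassociativity/counit on generators, x1, x2 linearly independent). *)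
Definition jordan_comodule_algebra (k : fieldType) (K : algType k)
  (H : hopf_algebra K) (a : 'I_2 -> 'I_2 -> K) : Prop :=
  [/\ forall b : 'I_3,
        rho_prod2 a 1 0 b - rho_prod2 a 0 1 b - rho_prod2 a 0 0 b = 0,
      forall i j : 'I_2, hDelta H (a i j) = \sum_(l < 2) htens H (a i l) (a l j) &
      forall i j : 'I_2, heps H (a i j) = (i == j)%:R].

(* Ext-algebra E of A_J: A_J is Koszul, so E = A_J^! = T(V^* )/(R^perp)      *)
(* (pairing <x_i^* x_j^*, x_k x_l> = d_ik d_jl), where R = k(x2x1-x1x2-x1^2). *)
(* E_1 = (A_1)^* with basis x1^*, x2^*, and E_2 is spanned by                 *)
(* e := x2^* x1^*, with multiplication E_1 x E_1 -> E_2 given by               *)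
(*   x_s^* x_t^* = ext_coeff s t . e :                                        *)
(*   x1^*x1^* = -e, x1^*x2^* = -e, x2^*x1^* = e, x2^*x2^* = 0.                *)
Definition ext_coeff (k : fieldType) (s t : 'I_2) : k :=
  match nat_of_ord s, nat_of_ord t with
  | 0%N, 0%N => -1
  | 0%N, 1%N => -1
  | 1%N, 0%N => 1
  | _, _ => 0
  end.

(* Homological codeterminant: rho^!(x_i^* ) = sum_s a i s (x) x_s^*, so       *)
(* rho^!(e) = rho^!(x2^* ) rho^!(x1^* ) = sum_(s,t) a 1 s a 0 t (x) x_s^* x_t^* *)
(*          = D (x) e   with D as below.                                        *)
Definition hom_codet (k : fieldType) (K : algType k) (a : 'I_2 -> 'I_2 -> K) : K :=
  \sum_(s < 2) \sum_(t < 2) ext_coeff k s t *: (a 1 s * a 0 t).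

(* Main.v *)
Require Import Defs.
From HB Require Import structures.
From mathcomp Require Import all_boot all_order all_algebra ring.
Set Implicit Arguments. Unset Strict Implicit. Unset Printing Implicit Defensive.
Import GRing.Theory.
Local Open Scope ring_scope.

Section Phi.
Variables (k : fieldType) (V : lmodType k).
Definition Phi (xs : seq V) (p : {poly k}) : V :=
  \sum_(i < size xs) p`_i.+1 *: xs`_i.
Lemma PhiD xs p q : Phi xs (p + q) = Phi xs p + Phi xs q.
Proof. by rewrite /Phi -big_split; apply eq_bigr => i _; rewrite coefD scalerDl. Qed.
Lemma PhiN xs p : Phi xs (- p) = - Phi xs p.
Proof. by rewrite /Phi -sumrN; apply eq_bigr => i _; rewrite coefN scaleNr. Qed.
Lemma Phi0 xs : Phi xs 0 = 0.
Proof. by rewrite /Phi big1 // => i _; rewrite coef0 scale0r. Qed.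
Lemma PhiZ xs c p : Phi xs (c%:P * p) = c *: Phi xs p.
Proof. by rewrite /Phi scaler_sumr; apply eq_bigr => i _; rewrite coefCM scalerA. Qed.
Lemma PhiMn xs p n : Phi xs (p *+ n) = Phi xs p *+ n.
Proof. elim: n => [|n IH]; first by rewrite !mulr0n Phi0. by rewrite !mulrS PhiD IH. Qed.
Lemma PhiMn' xs p n : Phi xs ((n%:R : k)%:P * p) = Phi xs p *+ n.
Proof. by rewrite PhiZ scaler_nat. Qed.
Lemma PhiX xs i : Phi xs 'X^(i.+1) = xs`_i.
Proof.
case: (ltnP i (size xs)) => lt.
  rewrite /Phi (bigD1 (Ordinal lt)) //= coefXn eqxx scale1r big1 ?addr0 //.
  move=> j neq; rewrite coefXn eqSS; case: eqP => [e|]; last by rewrite scale0r.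
  by move: neq; rewrite -val_eqE /= e eqxx.
rewrite nth_default // /Phi big1 // => j _; rewrite coefXn eqSS.
by rewrite (_ : (j == i :> nat) = false) ?scale0r //; apply/negbTE; rewrite neq_ltn (leq_trans (ltn_ord j) lt).
Qed.
End Phi.

Ltac inlist x l := match l with
  | nil => false
  | cons x _ => true
  | cons _ ?l' => inlist x l' end.
Ltac find_idx x l := match l with
  | cons x _ => constr:(0%N)
  | cons _ ?l' => let n := find_idx x l' in constr:(n.+1) end.
Ltac collect e acc := match e with
  | @Algebra.add _ ?a ?b => let acc1 := collect a acc in collect b acc1
  | @Algebra.opp _ ?a => collect a acc
  | @GRing.scale _ _ _ ?a => collect a acc
  | @Algebra.natmul _ ?a _ => collect a acc
  | @Algebra.zero _ => acc
  | _ => let b := inlist e acc in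
         match b with true => acc | false => constr:(cons e acc) end
  end.
Ltac topoly k e xs := match e with
  | @Algebra.add _ ?a ?b => let pa := topoly k a xs in let pb := topoly k b xs in constr:(pa + pb)
  | @Algebra.opp _ ?a => let pa := topoly k a xs in constr:(- pa)
  | @GRing.scale _ _ ?c ?a => let pa := topoly k a xs in constr:(c%:P * pa)
  | @Algebra.natmul _ ?a ?n => let pa := topoly k a xs in constr:(((n%:R : k)%:P) * pa)
  | @Algebra.zero _ => constr:(0 : {poly k})
  | _ => let i := find_idx e xs in constr:(('X^(i.+1) : {poly k}))
  end.
Ltac phi_simpl := rewrite ?(PhiMn', PhiD, PhiN, PhiZ, PhiMn, Phi0); rewrite ?PhiX //=.
Ltac lin_solve k V :=
  match goal with |- ?l = ?r =>
    let xs0 := collect l (@nil V) in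
    let xs1 := collect r xs0 in
    let xs := xs1 in
    let pl := topoly k l xs in
    let pr := topoly k r xs in
    transitivity (Phi xs pl); [ by phi_simpl |
    transitivity (Phi xs pr); [ congr (Phi _ _); ring | by phi_simpl ] ]
  end.


Section Gen.
Variable (k : fieldType).

Section LinF.
Variables (U V : lmodType k) (f : U -> V) (fl : lin f).
Lemma linD u v : f (u + v) = f u + f v.
Proof. by have := fl 1 u v; rewrite !scale1r. Qed.
Lemma lin0 : f 0 = 0.
Proof.
have h := linD 0 0; rewrite addr0 in h.
have : f 0 - f 0 = f 0 + f 0 - f 0 by rewrite -h.
by rewrite subrr addrK.
Qed.
Lemma linZ c u : f (c *: u) = c *: f u.
Proof. by rewrite -[c *: u]addr0 fl lin0 addr0. Qed.
Lemma linN u : f (- u) = - f u.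
Proof. by rewrite -scaleN1r linZ scaleN1r. Qed.
Lemma linB u v : f (u - v) = f u - f v.
Proof. by rewrite linD linN. Qed.
Lemma lin_sum (I : Type) (r : seq I) (P : pred I) (F : I -> U) :
  f (\sum_(i <- r | P i) F i) = \sum_(i <- r | P i) f (F i).
Proof. exact: (big_morph f linD lin0). Qed.
Lemma linMn u n : f (u *+ n) = f u *+ n.
Proof. by rewrite -scaler_nat linZ scaler_nat. Qed.
End LinF.

Definition fmul (R : pzRingType) (I : finType) (X Y : I -> I -> R) (i j : I) : R :=
  \sum_l X i l * Y l j.
Definition dlt (R : pzRingType) (I : finType) (i j : I) : R := (i == j)%:R.
Arguments dlt {R I}.

Lemma fmulA (R : pzRingType) (I : finType) (X Y Z : I -> I -> R) i j :
  fmul (fmul X Y) Z i j = fmul X (fmul Y Z) i j.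
Proof.
rewrite /fmul; under eq_bigr do rewrite mulr_suml.
rewrite exchange_big; apply: eq_bigr => l _; rewrite mulr_sumr.
by apply: eq_bigr => m _; rewrite mulrA.
Qed.


Lemma fmul_dr (R : pzRingType) (I : finType) (X : I -> I -> R) i j :
  fmul X dlt i j = X i j.
Proof.
rewrite /fmul /dlt (bigD1 j) //= eqxx mulr1 big1 ?addr0 // => l /negbTE ->.
by rewrite mulr0.
Qed.
Lemma fmul_dl (R : pzRingType) (I : finType) (X : I -> I -> R) i j :
  fmul dlt X i j = X i j.
Proof.
rewrite /fmul /dlt (bigD1 i) //= eqxx mul1r big1 ?addr0 // => l.
by rewrite eq_sym => /negbTE ->; rewrite mul0r.
Qed.

Lemma inv_uniq (R : pzRingType) (I : finType) (L X Y : I -> I -> R) :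
  (forall i j, fmul L X i j = dlt i j) -> (forall i j, fmul X Y i j = dlt i j) ->
  forall i j, L i j = Y i j.
Proof.
move=> hl hr i j.
rewrite -fmul_dr -[RHS]fmul_dl.
have -> : fmul L dlt i j = fmul L (fmul X Y) i j.
  by apply: eq_bigr => l _; rewrite hr.
by rewrite -fmulA; apply: eq_bigr => l _; rewrite hl.
Qed.

Lemma sum2 (V : zmodType) (F : 'I_2 -> V) : \sum_(i < 2) F i = F 0 + F 1.
Proof. by rewrite big_ord_recl big_ord1; congr (F _ + F _); apply/val_inj. Qed.
End Gen.
Arguments dlt {R I}.

Lemma sum_nat_dlt (V : zmodType) (I : finType) (n : I) (F : I -> V) :
  \sum_m F m *+ (n == m) = F n.
Proof.
rewrite (bigD1 n) //= eqxx mulr1n big1 ?addr0 // => m.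
by rewrite eq_sym => /negbTE ->; rewrite mulr0n.
Qed.

Section Hopf.
Variables (k : fieldType) (K : algType k) (H : hopf_algebra K).
Local Notation S := (hS H).
Local Notation Dl := (hDelta H).
Local Notation T := (htens H).
Local Notation ep := (heps H).

Lemma TlinL v : lin (fun u => T u v). Proof. by case: (htens_univ H). Qed.
Lemma TlinR u : lin (T u). Proof. by case: (htens_univ H). Qed.

Lemma epD x y : ep (x + y) = ep x + ep y.
Proof. by have := heps_lin H 1 x y; rewrite scale1r mul1r. Qed.
Lemma ep0 : ep 0 = 0.
Proof.
have h := epD 0 0; rewrite addr0 in h.
have : ep 0 - ep 0 = ep 0 + ep 0 - ep 0 by rewrite -h.
by rewrite subrr addrK.
Qed.
Lemma ep_sum (I : Type) (r : seq I) (P : pred I) (F : I -> K) :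
  ep (\sum_(i <- r | P i) F i) = \sum_(i <- r | P i) ep (F i).
Proof. exact: (big_morph ep epD ep0). Qed.
Lemma epMn x n : ep (x *+ n) = ep x *+ n.
Proof. by elim: n => [|n IH]; rewrite ?mulr0n ?ep0 // !mulrS epD IH. Qed.

Definition corep (I : finType) (c : I -> I -> K) :=
  (forall i j, Dl (c i j) = \sum_l T (c i l) (c l j)) /\
  (forall i j, ep (c i j) = (i == j)%:R).

Section Cor.
Variables (I : finType) (c : I -> I -> K) (cc : corep c).

Lemma corep_invl i j : fmul (fun i j => S (c i j)) c i j = dlt i j.
Proof.
rewrite /dlt; have := hantipode_l H (c i j); case: cc => -> ->.
rewrite (lin_sum (@hS_id_lin _ _ H)) scaler_nat => <-.
by apply: eq_bigr => l _; rewrite hS_id_tens.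
Qed.
Lemma corep_invr i j : fmul c (fun i j => S (c i j)) i j = dlt i j.
Proof.
rewrite /dlt; have := hantipode_r H (c i j); case: cc => -> ->.
rewrite (lin_sum (@hid_S_lin _ _ H)) scaler_nat => <-.
by apply: eq_bigr => l _; rewrite hid_S_tens.
Qed.

Lemma corep_prod : corep (fun (x y : I * I) => c x.1 y.1 * c x.2 y.2).
Proof.
case: cc => cD cE; split.
  move=> [x1 x2] [y1 y2] /=.
  rewrite hDelta_mul !cD -(pair_big xpredT xpredT (fun m n =>
     T (c x1 m * c x2 n) (c m y1 * c n y2))) /= mulr_suml.
  apply: eq_bigr => m _; rewrite mulr_sumr; apply: eq_bigr => n _.
  by rewrite htens_mul.
move=> [x1 x2] [y1 y2] /=.
by rewrite heps_mul !cE -natrM mulnb -xpair_eqE.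
Qed.

End Cor.

Lemma S_anti (I : finType) (c : I -> I -> K) (cc : corep c) i p j q : S (c i p * c j q) = S (c j q) * S (c i p).
Proof.
pose B := fun (x y : I * I) => c x.1 y.1 * c x.2 y.2.
pose Cm := fun (x y : I * I) => S (c x.2 y.2) * S (c x.1 y.1).
have hr : forall x y, fmul B Cm x y = dlt x y.
  move=> [x1 x2] [y1 y2]; rewrite /fmul /B /Cm /=.
  rewrite -(pair_big xpredT xpredT (fun m n =>
     c x1 m * c x2 n * (S (c n y2) * S (c m y1)))) /=.
  transitivity (\sum_m (c x1 m * S (c m y1)) *+ (x2 == y2)).
    apply: eq_bigr => m _.
    transitivity (c x1 m * fmul c (fun i j => S (c i j)) x2 y2 * S (c m y1)).
      rewrite /fmul mulr_sumr mulr_suml; apply: eq_bigr => n _; by rewrite !mulrA.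
    by rewrite (corep_invr cc) /dlt mulr_natr mulrnAl.
  rewrite sumrMnl; have := corep_invr cc x1 y1; rewrite /fmul => ->.
  by rewrite /dlt -mulrnA mulnb -xpair_eqE.
have := @inv_uniq _ _ (fun x y => S (B x y)) B Cm _ hr (i, j) (p, q).
apply.
exact: (corep_invl (corep_prod cc)).
Qed.

Lemma DS (I : finType) (c : I -> I -> K) (cc : corep c) i j :
  Dl (S (c i j)) = \sum_l T (S (c l j)) (S (c i l)).
Proof.
pose L := fun i j => Dl (S (c i j)).
pose X := fun i j => Dl (c i j).
pose Y := fun i j => \sum_l T (S (c l j)) (S (c i l)).
apply: (@inv_uniq _ _ L X Y) => {i j} i j.
- rewrite /fmul /L /X.
  transitivity (Dl (fmul (fun i j => S (c i j)) c i j)).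
    rewrite /fmul (lin_sum (hDelta_lin H)); apply: eq_bigr => l _.
    by rewrite hDelta_mul.
  by rewrite (corep_invl cc) /dlt (linMn (hDelta_lin H)) hDelta_one.
- rewrite /fmul /X /Y; case: (cc) => cD _.
  transitivity (\sum_l \sum_n \sum_m T (c i n * S (c m j)) (c n l * S (c l m))).
    apply: eq_bigr => l _; rewrite cD mulr_suml; apply: eq_bigr => n _.
    rewrite mulr_sumr; apply: eq_bigr => m _; by rewrite htens_mul.
  rewrite exchange_big /=.
  transitivity (\sum_n \sum_m T (c i n * S (c m j)) 1 *+ (n == m)).
    apply: eq_bigr => n _; rewrite exchange_big; apply: eq_bigr => m _.
    rewrite -(lin_sum (TlinR _)).
    have := corep_invr cc n m; rewrite /fmul /dlt => ->.
    by rewrite (linMn (TlinR _)).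
  under eq_bigr do rewrite sum_nat_dlt.
  rewrite -(lin_sum (TlinL _)).
  have := corep_invr cc i j; rewrite /fmul /dlt => ->.
  by rewrite (linMn (TlinL _)) htens_one.
Qed.

Lemma epS (I : finType) (c : I -> I -> K) (cc : corep c) i j :
  ep (S (c i j)) = (i == j)%:R.
Proof.
have h : forall i j, \sum_l ep (S (c i l)) * ep (c l j) = (i == j)%:R.
  move=> i' j'.
  transitivity (ep (fmul (fun i j => S (c i j)) c i' j')).
    by rewrite /fmul ep_sum; apply: eq_bigr => l _; rewrite heps_mul.
  by rewrite (corep_invl cc) /dlt epMn heps_one.
have := h i j; case: (cc) => _ cE.
under eq_bigr do rewrite cE.
move=> <-; symmetry; exact: (fmul_dr (fun i j => ep (S (c i j))) i j).
Qed.

Lemma epZ c x : ep (c *: x) = c * ep x.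
Proof. by have := heps_lin H c x 0; rewrite !addr0 ep0 addr0. Qed.

Lemma corep_S (I : finType) (c : I -> I -> K) (cc : corep c) :
  corep (fun i j => S (c j i)).
Proof. by split=> i j; [exact: DS | rewrite epS // eq_sym]. Qed.

Lemma grouplike x : Dl x = T x x -> ep x = 1 -> S x * x = 1 /\ x * S x = 1.
Proof.
move=> hx ex; split.
  by have := hantipode_l H x; rewrite hx hS_id_tens ex scale1r.
by have := hantipode_r H x; rewrite hx hid_S_tens ex scale1r.
Qed.
End Hopf.

Lemma ord2P (P : 'I_2 -> Prop) : P 0 -> P 1 -> forall i, P i.
Proof.
move=> h0 h1 [[|[|n]] lt].
- by have -> : Ordinal lt = 0 by apply/val_inj.
- by have -> : Ordinal lt = 1 by apply/val_inj.
- by [].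
Qed.

Lemma eq_from (V : zmodType) (x y h : V) : h = 0 -> x - y = h -> x = y.
Proof. by move=> -> /eqP; rewrite subr_eq0 => /eqP. Qed.

Lemma sum3_ex (V : zmodType) (F : 'I_2 -> 'I_2 -> 'I_2 -> V) :
  \sum_m \sum_s \sum_t F m s t = \sum_s \sum_t \sum_m F m s t.
Proof.
rewrite exchange_big; apply: eq_bigr => s _; by rewrite exchange_big.
Qed.

Lemma sum4_ex (V : zmodType) (F : 'I_2 -> 'I_2 -> 'I_2 -> 'I_2 -> V) :
  \sum_s \sum_t \sum_m \sum_n F s t m n = \sum_m \sum_n \sum_s \sum_t F s t m n.
Proof.
transitivity (\sum_s \sum_m \sum_n \sum_t F s t m n).
  apply: eq_bigr => s _; by rewrite sum3_ex.
by rewrite exchange_big; apply: eq_bigr => m _; rewrite exchange_big.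
Qed.

Unset Implicit Arguments.
Theorem lemma5p8 (k : fieldType) (K : algType k) (H : hopf_algebra K)
  (a : 'I_2 -> 'I_2 -> K) :
  bijective (hS H) ->
  jordan_comodule_algebra H a ->
  let S := hS H in
  let D := hom_codet a in
  exists2 Dinv : K, D * Dinv = 1 /\ Dinv * D = 1 &
  [/\ S (S (a 0 0)) = D * (a 0 0 - a 1 0 *+ 2) * Dinv,
      S (S (a 0 1)) = D * (a 0 1 + a 0 0 *+ 2 - a 1 1 *+ 2 - a 1 0 *+ 4) * Dinv,
      S (S (a 1 0)) = D * a 1 0 * Dinv &
      S (S (a 1 1)) = D * (a 1 1 + a 1 0 *+ 2) * Dinv].
Proof.
move=> _ [jr cD cE] S D; rewrite {}/S.
have cc : corep H a by [].
have e00 : ext_coeff k 0 0 = -1 := erefl.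
have e01 : ext_coeff k 0 1 = -1 := erefl.
have e10 : ext_coeff k 1 0 = 1 := erefl.
have e11 : ext_coeff k 1 1 = 0 := erefl.
have R1 : forall m n, \sum_s \sum_t ext_coeff k s t *: (a m s * a n t)
                      = ext_coeff k m n *: D.
  have J000 : jordan_coord k 0 0 0 = 1 := erefl.
  have J001 : jordan_coord k 0 0 1 = 0 := erefl.
  have J002 : jordan_coord k 0 0 2 = 0 := erefl.
  have J010 : jordan_coord k 0 1 0 = 0 := erefl.
  have J011 : jordan_coord k 0 1 1 = 1 := erefl.
  have J012 : jordan_coord k 0 1 2 = 0 := erefl.
  have J100 : jordan_coord k 1 0 0 = 1 := erefl.
  have J101 : jordan_coord k 1 0 1 = 1 := erefl.
  have J102 : jordan_coord k 1 0 2 = 0 := erefl.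
  have J110 : jordan_coord k 1 1 0 = 0 := erefl.
  have J111 : jordan_coord k 1 1 1 = 0 := erefl.
  have J112 : jordan_coord k 1 1 2 = 1 := erefl.
  have j0 := jr 0; have j1 := jr 1; have j2 := jr 2.
  rewrite /rho_prod2 !sum2 ?(J000,J001,J002,J010,J011,J012,J100,J101,J102,J110,J111,J112) in j0 j1 j2.
  rewrite /D /hom_codet.
  apply: ord2P; apply: ord2P; rewrite !sum2 ?(e00,e01,e10,e11).
  - apply: (eq_from j0); lin_solve k K.
  - apply: (eq_from j1); lin_solve k K.
  - lin_solve k K.
  - apply: (eq_from j2); lin_solve k K.

pose SL := @hS_lin _ _ H.
have b01 : ((0 : 'I_2) == 1) = false := erefl.
have b10 : ((1 : 'I_2) == 0) = false := erefl.
have epD1 : heps H D = 1.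
  rewrite /D /hom_codet [heps H _](ep_sum H).
  under eq_bigr do rewrite [heps H _](ep_sum H).
  rewrite !sum2.
  do 4! rewrite [heps H (_ *: _)](epZ H).
  rewrite !heps_mul !cE.
  rewrite eqxx b01 b10 /= ?mulr1n ?mulr0n e00 e01 e10 e11; ring.
have DD : hDelta H D = htens H D D.
  rewrite {1}/D /hom_codet (lin_sum (hDelta_lin H)).
  transitivity (\sum_s \sum_t \sum_m \sum_n
     ext_coeff k s t *: htens H (a 1 m * a 0 n) (a m s * a n t)).
    apply: eq_bigr => s _; rewrite (lin_sum (hDelta_lin H)); apply: eq_bigr => t _.
    rewrite (linZ (hDelta_lin H)) hDelta_mul !cD mulr_suml scaler_sumr.
    apply: eq_bigr => m _; rewrite mulr_sumr scaler_sumr; apply: eq_bigr => n _.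
    by rewrite htens_mul.
  rewrite sum4_ex.
  transitivity (\sum_m \sum_n htens H (ext_coeff k m n *: (a 1 m * a 0 n)) D).
    apply: eq_bigr => m _; apply: eq_bigr => n _.
    rewrite (linZ (TlinL H _)) -(linZ (TlinR H _)) -R1 (lin_sum (TlinR H _)).
    apply: eq_bigr => s _; rewrite (lin_sum (TlinR H _)); apply: eq_bigr => t _.
    by rewrite (linZ (TlinR H _)).
  under eq_bigr do rewrite -(lin_sum (TlinL H _)).
  by rewrite -(lin_sum (TlinL H _)).
have [SDl SDr] := grouplike DD epD1.
exists (hS H D) => //.
have SR1 : forall m n, \sum_s \sum_t ext_coeff k s t *: (hS H (a n t) * hS H (a m s))
                       = ext_coeff k m n *: hS H D.
  move=> m n; rewrite -(linZ SL) -R1 (lin_sum SL); apply: eq_bigr => s _.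
  rewrite (lin_sum SL); apply: eq_bigr => t _; by rewrite (linZ SL) (S_anti cc).
have Ul := corep_invl cc.
have UE : forall p n, \sum_m ext_coeff k m n *: hS H (a p m)
                      = (\sum_t ext_coeff k p t *: a n t) * hS H D.
  move=> p n.
  have h : (\sum_m ext_coeff k m n *: hS H (a p m)) * D = \sum_t ext_coeff k p t *: a n t.
    transitivity (\sum_m hS H (a p m) * (\sum_s \sum_t ext_coeff k s t *: (a m s * a n t))).
      rewrite mulr_suml; apply: eq_bigr => m _; by rewrite R1 -scalerAl -scalerAr.
    transitivity (\sum_m \sum_s \sum_t ext_coeff k s t *: (hS H (a p m) * a m s * a n t)).
      apply: eq_bigr => m _; rewrite mulr_sumr; apply: eq_bigr => s _.
      rewrite mulr_sumr; apply: eq_bigr => t _; by rewrite -scalerAr mulrA.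
    rewrite sum3_ex.
    transitivity (\sum_s \sum_t (ext_coeff k s t *: a n t) *+ (p == s)).
      apply: eq_bigr => s _; apply: eq_bigr => t _.
      rewrite -scaler_sumr -mulr_suml.
      have := Ul p s; rewrite /fmul /dlt => ->.
      by rewrite mulr_natl scalerMnr.
    under eq_bigr do rewrite sumrMnl.
    by rewrite sum_nat_dlt.
  by rewrite -h -mulrA SDr mulr1.
have cw := corep_S cc.
have Wr := corep_invr cw.
have ZE : forall n q, D * (\sum_t ext_coeff k q t *: hS H (a n t))
                      = \sum_m ext_coeff k m n *: hS H (hS H (a q m)).
  move=> n q.
  have h : \sum_t ext_coeff k q t *: hS H (a n t)
           = hS H D * \sum_m ext_coeff k m n *: hS H (hS H (a q m)).
    symmetry.
    transitivity (\sum_m (ext_coeff k m n *: hS H D) * hS H (hS H (a q m))).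
      rewrite mulr_sumr; apply: eq_bigr => m _; by rewrite -scalerAr -scalerAl.
    under eq_bigr do rewrite -SR1.
    transitivity (\sum_m \sum_s \sum_t ext_coeff k s t *:
        (hS H (a n t) * (hS H (a m s) * hS H (hS H (a q m))))).
      apply: eq_bigr => m _; rewrite mulr_suml; apply: eq_bigr => s _.
      rewrite mulr_suml; apply: eq_bigr => t _; by rewrite -scalerAl mulrA.
    rewrite sum3_ex.
    transitivity (\sum_s \sum_t (ext_coeff k s t *: hS H (a n t)) *+ (q == s)).
      apply: eq_bigr => s _; apply: eq_bigr => t _.
      rewrite -scaler_sumr -mulr_sumr.
      have := Wr s q; rewrite /fmul /dlt => ->.
      by rewrite mulr_natr scalerMnr eq_sym.
    under eq_bigr do rewrite sumrMnl.
    by rewrite sum_nat_dlt.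
  by rewrite h mulrA SDr mul1r.
have Z0 : forall q, hS H (hS H (a q 0)) = - (D * \sum_t ext_coeff k q t *: hS H (a 1 t)).
  move=> q; move: (ZE 1 q); rewrite [X in _ = X -> _]sum2 e01 e11 scale0r addr0 scaleN1r => ->.
  by rewrite opprK.
have Z1 : forall q, hS H (hS H (a q 1)) = D * (\sum_t ext_coeff k q t *: hS H (a 0 t))
                     - D * \sum_t ext_coeff k q t *: hS H (a 1 t).
  move=> q; move: (ZE 0 q); rewrite [X in _ = X -> _]sum2 e00 e10 scaleN1r scale1r Z0 => ->.
  lin_solve k K.
have U0 : forall p, hS H (a p 0) = - ((\sum_t ext_coeff k p t *: a 1 t) * hS H D).
  move=> p; move: (UE p 1); rewrite [X in X = _ -> _]sum2 e01 e11 scale0r addr0 scaleN1r => <-.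
  by rewrite opprK.
have U1 : forall p, hS H (a p 1) = (\sum_t ext_coeff k p t *: a 0 t) * hS H D
                                   - (\sum_t ext_coeff k p t *: a 1 t) * hS H D.
  move=> p; move: (UE p 0); rewrite [X in X = _ -> _]sum2 e00 e10 scaleN1r scale1r => <-.
  rewrite U0; lin_solve k K.
split; rewrite ?Z0 ?Z1 !sum2 ?U0 ?U1 !sum2 ?(e00,e01,e10,e11);
  do 4! rewrite ?mulrDr ?mulrDl ?mulrN ?mulNr -?scalerAr -?scalerAl ?mulrA ?mulrnAr ?mulrnAl;
  set X00 := D * a 0 0 * hS H D; set X01 := D * a 0 1 * hS H D;
  set X10 := D * a 1 0 * hS H D; set X11 := D * a 1 1 * hS H D.
- lin_solve k K.
- lin_solve k K.
- lin_solve k K.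
- lin_solve k K.
Qed.
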